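(* Consider the ship dynamics $$M\dot\nu(t) + D(\nu(t))\nu(t) + C(\nu(t))\nu(t) = \tau(t) + \tau_d(t), \qquad \nu=[u,v,r]^\top\in\mathbb{R}^3,$$ with $M$, $D$, $C$, $\kappa_{ij}$, $\sigma$, $\Gamma_1,\Gamma_2,\Gamma_3$ and $T$ as described in the context, and assume $\kappa_{23}\kappa_{32}<\kappa_{22}\kappa_{33}$ (so $\sigma>0$) and $\Gamma_1,\Gamma_2,\Gamma_3>0$. Run the disturbance observer $$\hat\tau_d(t) = \zeta(t) + T\nu(t),\qquad \dot\zeta(t) = -T M^{-1}\big(\tau(t) + \hat\tau_d(t) - D(\nu(t))\nu(t) - C(\nu(t))\nu(t)\big),$$ from an arbitrary initial value $\zeta(0)\in\mathbb{R}^3$, along a solution $(\nu,\zeta)$ defined for $t\ge 0$. If the disturbance $\tau_d$ is constant, then the estimation error $z(t)=\tau_d-\hat\tau_d(t)$ satisfies $$\dot z(t) = -\sigma\,\mathrm{diag}(\Gamma_1,\Gamma_2,\Gamma_3)\, z(t),$$ i.e. $z_i(t)=e^{-\sigma\Gamma_i t}z_i(0)$ for $i=1,2,3$; in particular the error dynamics are globally exponentially stable and $z(t)\to 0$ exponentially, with all three components converging at the common rate $\sigma\Gamma$ when $\Gamma_1=\Gamma_2=\Gamma_3=\Gamma$.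
   Context: $\nu=[u,v,r]^\top$ are the surge, sway and yaw-rate velocities of the ship, $\tau(t)\in\mathbb{R}^3$ is the control input and $\tau_d(t)\in\mathbb{R}^3$ the environmental disturbance (wind, waves, currents). The mass matrix is constant, symmetric, positive definite, of the form $M=\begin{bmatrix} m_{11}&0&0\\0&m_{22}&m_{23}\\0&m_{32}&m_{33}\end{bmatrix}$ with positive entries, and its inverse is written $M^{-1}=\begin{bmatrix} \kappa_{11}&0&0\\0&\kappa_{22}&\kappa_{23}\\0&\kappa_{32}&\kappa_{33}\end{bmatrix}$. $D(\nu)$ is the nonlinear damping matrix $\begin{bmatrix} d_{11}&0&0\\0&d_{22}&d_{23}\\0&d_{32}&d_{33}\end{bmatrix}$ with $d_{11}=-X_u-X_{|u|u}-X_{uuu}u^2$, $d_{22}=-Y_v-Y_{|v|v}-Y_{|r|v}|r|-Y_{vvv}v^2$, $d_{23}=-Y_r-Y_{|v|r}|v|-Y_{|r|r}|r|$, $d_{32}=-N_v-N_{|v|v}|v|-N_{|r|v}|r|$, $d_{33}=-N_r-N_{|v|r}|v|-N_{|r|r}|r|-N_{rrr}r^2$ (real hydrodynamic constants), and $C(\nu)=\begin{bmatrix}0&0&c_{13}\\0&0&c_{23}\\-c_{13}&-c_{23}&0\end{bmatrix}$ with $c_{13}=-m_{22}v-m_{23}r$, $c_{23}=m_{11}u$. Define $\sigma = 1-\frac{\kappa_{23}\kappa_{32}}{\kappa_{22}\kappa_{33}}$, adaptive gains $\Gamma_1,\Gamma_2,\Gamma_3\in\mathbb{R}$, and $$T=\begin{bmatrix}\Gamma_1\frac{\sigma}{\kappa_{11}}&0&0\\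 0&\frac{\Gamma_2}{\kappa_{22}}&-\Gamma_2\frac{\kappa_{23}}{\kappa_{22}\kappa_{33}}\\ 0&-\Gamma_3\frac{\kappa_{32}}{\kappa_{22}\kappa_{33}}&\frac{\Gamma_3}{\kappa_{33}}\end{bmatrix}.$$ *)

(* Defs.v *)
From HB Require Import structures.
From mathcomp Require Import all_boot all_order all_algebra.
From mathcomp Require Import all_classical all_reals all_analysis.
Set Implicit Arguments. Unset Strict Implicit. Unset Printing Implicit Defensive.
Import Order.TTheory GRing.Theory Num.Theory.
Import numFieldNormedType.Exports.
Local Open Scope ring_scope.

Record hydro (R : realType) := Hydro {
  X_u : R; X_absu_u : R; X_uuu : R;
  Y_v : R; Y_absv_v : R; Y_absr_v : R; Y_vvv : R;
  Y_r : R; Y_absv_r : R; Y_absr_r : R;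
  N_v : R; N_absv_v : R; N_absr_v : R;
  N_r : R; N_absv_r : R; N_absr_r : R; N_rrr : R }.

Section Defs.
Variable R : realType.

(* Indices: 0 = first (surge u), 1 = second (sway v), 2 = third (yaw rate r). *)
Definition i1 : 'I_3 := @Ordinal 3 0 isT.
Definition i2 : 'I_3 := @Ordinal 3 1 isT.
Definition i3 : 'I_3 := @Ordinal 3 2 isT.

Definition mx3 (a11 a12 a13 a21 a22 a23 a31 a32 a33 : R) : 'M[R]_3 :=
  \matrix_(i < 3, j < 3)
    nth 0 (nth [::] [:: [:: a11; a12; a13]; [:: a21; a22; a23]; [:: a31; a32; a33]] i) j.

Definition Dmat (h : hydro R) (nu : 'cV[R]_3) : 'M[R]_3 :=
  let u := nu i1 0 in let v := nu i2 0 in let r := nu i3 0 in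
  let d11 := - X_u h - X_absu_u h - X_uuu h * u ^+ 2 in
  let d22 := - Y_v h - Y_absv_v h - Y_absr_v h * `|r| - Y_vvv h * v ^+ 2 in
  let d23 := - Y_r h - Y_absv_r h * `|v| - Y_absr_r h * `|r| in
  let d32 := - N_v h - N_absv_v h * `|v| - N_absr_v h * `|r| in
  let d33 := - N_r h - N_absv_r h * `|v| - N_absr_r h * `|r| - N_rrr h * r ^+ 2 in
  mx3 d11 0 0  0 d22 d23  0 d32 d33.

Definition Cmat (M : 'M[R]_3) (nu : 'cV[R]_3) : 'M[R]_3 :=
  let u := nu i1 0 in let v := nu i2 0 in let r := nu i3 0 in
  let c13 := - M i2 i2 * v - M i2 i3 * r in
  let c23 := M i1 i1 * u in
  mx3 0 0 c13  0 0 c23  (- c13) (- c23) 0.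

Definition kappa (M : 'M[R]_3) (i j : 'I_3) : R := invmx M i j.

Definition sigma (M : 'M[R]_3) : R :=
  1 - kappa M i2 i3 * kappa M i3 i2 / (kappa M i2 i2 * kappa M i3 i3).

Definition Tmat (M : 'M[R]_3) (G1 G2 G3 : R) : 'M[R]_3 :=
  let k := kappa M in
  mx3 (G1 * sigma M / k i1 i1) 0 0
      0 (G2 / k i2 i2) (- G2 * k i2 i3 / (k i2 i2 * k i3 i3))
      0 (- G3 * k i3 i2 / (k i2 i2 * k i3 i3)) (G3 / k i3 i3).

Definition Gam (G1 G2 G3 : R) (i : 'I_3) : R := [:: G1; G2; G3]`_i.

Definition Gdiag (G1 G2 G3 : R) : 'M[R]_3 := diag_mx (\row_i Gam G1 G2 G3 i).

Definition posdef (M : 'M[R]_3) : Prop :=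
  forall x : 'cV[R]_3, x != 0 -> 0 < (x^T *m M *m x) 0 0.

End Defs.

(* Main.v *)
Require Import Defs.
From HB Require Import structures.
From mathcomp Require Import all_boot all_order all_algebra.
From mathcomp Require Import all_classical all_reals all_analysis.
From mathcomp Require Import ring lra.
Import Order.TTheory GRing.Theory Num.Theory.
Import numFieldNormedType.Exports.
Local Open Scope classical_set_scope.
Local Open Scope ring_scope.

Lemma ord3 (i : 'I_3) : i = i1 \/ i = i2 \/ i = i3.
Proof.
case: i => [[|[|[|n]]] Hi].
- by left; apply/val_inj.
- by right; left; apply/val_inj.
- by right; right; apply/val_inj.
- by [].
Qed.

Lemma sum3 (R : realType) (F : 'I_3 -> R) : \sum_(j < 3) F j = F i1 + F i2 + F i3.
Proof.
rewrite !big_ord_recr big_ord0 /= add0r.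
by congr (F _ + F _ + F _); apply/val_inj.
Qed.

Section A.
Variable R : realType.
Variable M : 'M[R]_3.
Hypotheses (h12 : M i1 i2 = 0) (h13 : M i1 i3 = 0) (h21 : M i2 i1 = 0) (h31 : M i3 i1 = 0)
  (p11 : 0 < M i1 i1) (p22 : 0 < M i2 i2) (p33 : 0 < M i3 i3) (pd : posdef M).

Let d := M i2 i2 * M i3 i3 - M i2 i3 * M i3 i2.

Lemma d_gt0 : 0 < d.
Proof.
pose x : 'cV[R]_3 := \col_i [:: 0; M i3 i3; - M i3 i2]`_i.
have xn0 : x != 0.
  apply/negP => /eqP/matrixP/(_ i2 0); rewrite !mxE /= => H.
  by move: p33; rewrite H ltxx.
have := pd x xn0.
rewrite !mxE sum3 !mxE !sum3 !mxE /=.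
rewrite h21 h31 => H.
have -> : d = ((M i2 i2 * M i3 i3 + M i2 i3 * - M i3 i2) * M i3 i3 +
    (M i3 i2 * M i3 i3 + M i3 i3 * - M i3 i2) * - M i3 i2) / M i3 i3.
  rewrite /d; field; exact: lt0r_neq0.
apply: divr_gt0 => //; move: H; congr (_ < _); ring.
Qed.

Definition Ninv : 'M[R]_3 := mx3 (M i1 i1)^-1 0 0 0 (M i3 i3 / d) (- M i2 i3 / d)
  0 (- M i3 i2 / d) (M i2 i2 / d).

Lemma MN : M *m Ninv = 1%:M.
Proof.
have dn0 : d != 0 by exact: lt0r_neq0 d_gt0.
have m1 : M i1 i1 != 0 by exact: lt0r_neq0.
apply/matrixP => i j; rewrite /Ninv /mx3 !mxE sum3.
by case: (ord3 i) => [->|[->|->]]; case: (ord3 j) => [->|[->|->]];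
  rewrite !mxE /= ?h12 ?h13 ?h21 ?h31 /d; field.
Qed.

Lemma invM : invmx M = Ninv.
Proof.
have [uM _] := mulmx1_unit MN.
by rewrite -[RHS](mulKmx uM) MN mulmx1.
Qed.

Lemma TK (G1 G2 G3 : R) : Tmat M G1 G2 G3 *m invmx M = sigma M *: Gdiag G1 G2 G3.
Proof.
have dn0 : M i2 i2 * M i3 i3 - M i2 i3 * M i3 i2 != 0 by exact: lt0r_neq0 d_gt0.
have m1 : M i1 i1 != 0 by exact: lt0r_neq0.
have m2 : M i2 i2 != 0 by exact: lt0r_neq0.
have m3 : M i3 i3 != 0 by exact: lt0r_neq0.
rewrite /Tmat /sigma /kappa invM.
apply/matrixP => i j; rewrite /Gdiag /Ninv /mx3 !mxE sum3.
case: (ord3 i) => [->|[->|->]]; case: (ord3 j) => [->|[->|->]];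
  rewrite !mxE /= /Gam /= ; rewrite /d; field; by rewrite ?dn0 ?m1 ?m2 ?m3.
Qed.
End A.

Lemma cont_of_derive (R : realType) (f : R -> R) (x df : R) :
  is_derive x 1 f df -> {for x, continuous f}.
Proof.
move=> H; apply: differentiable_continuous; apply/derivable1_diffP; exact: ex_derive.
Qed.

Lemma deriv_lin (R : realType) (a b1 b2 b3 : R) (f g1 g2 g3 : R -> R) (t df dg1 dg2 dg3 : R) :
  is_derive t 1 f df -> is_derive t 1 g1 dg1 -> is_derive t 1 g2 dg2 ->
  is_derive t 1 g3 dg3 ->
  is_derive t 1 (fun s => a - f s - (b1 * g1 s + b2 * g2 s + b3 * g3 s))
    (- df - (b1 * dg1 + b2 * dg2 + b3 * dg3)).
Proof.
move=> Hf H1 H2 H3.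
have -> : (fun s => a - f s - (b1 * g1 s + b2 * g2 s + b3 * g3 s)) =
  (cst a - f - (b1 \*: g1 + b2 \*: g2 + b3 \*: g3)) by apply/funext.
have H := is_deriveB (is_deriveB (is_derive_cst a t 1) Hf)
  (is_deriveD (is_deriveD (is_deriveZ b1 H1) (is_deriveZ b2 H2)) (is_deriveZ b3 H3)).
by rewrite sub0r in H.
Qed.

Lemma cvg_lin (R : realType) (a b1 b2 b3 : R) (f g1 g2 g3 : R -> R) (lf l1 l2 l3 : R) :
  f s @[s --> 0^'+] --> lf -> g1 s @[s --> 0^'+] --> l1 ->
  g2 s @[s --> 0^'+] --> l2 -> g3 s @[s --> 0^'+] --> l3 ->
  (fun s => a - f s - (b1 * g1 s + b2 * g2 s + b3 * g3 s)) s @[s --> 0^'+] -->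
    (a - lf - (b1 * l1 + b2 * l2 + b3 * l3)).
Proof.
move=> Hf H1 H2 H3.
apply: cvgB; first by apply: cvgB => //; exact: cvg_cst.
apply: cvgD; first apply: cvgD.
all: by apply: cvgM => //; exact: cvg_cst.
Qed.

Lemma deriv_exp (R : realType) (c t : R) :
  is_derive t 1 (fun s => expR (c * s)) (expR (c * t) * c).
Proof.
have H := is_derive1_comp (is_derive_expR (c * t)) (is_deriveZ c (is_derive_id t 1)).
move: H; rewrite /= /GRing.scale /= mulr1; exact.
Qed.

Lemma entry_lem (R : realType) (A : 'M[R]_3) (a v w : 'cV[R]_3) i :
  (a - (v + A *m w)) i 0 = a i 0 - v i 0 - (A i i1 * w i1 0 + A i i2 * w i2 0 + A i i3 * w i3 0).
Proof. by rewrite !mxE sum3 opprD addrA. Qed.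

Lemma entry_lem2 (R : realType) (A : 'M[R]_3) (a w : 'cV[R]_3) i :
  (- a - A *m w) i 0 = - a i 0 - (A i i1 * w i1 0 + A i i2 * w i2 0 + A i i3 * w i3 0).
Proof. by rewrite !mxE sum3. Qed.

Lemma entry3 (R : realType) (k G1 G2 G3 : R) (w : 'cV[R]_3) i :
  ((k *: Gdiag G1 G2 G3) *m w) i 0 = k * Gam G1 G2 G3 i * w i 0.
Proof.
by rewrite -scalemxAl mxE /Gdiag mul_diag_mx !mxE mulrA.
Qed.

Theorem mainTheorem1 (R : realType) (M : 'M[R]_3) (h : hydro R)
  (G1 G2 G3 : R)
  (tau : R -> 'cV[R]_3) (taud : 'cV[R]_3)
  (nu zeta nudot zetadot : R -> 'cV[R]_3) :
  (* structure of the mass matrix: constant, symmetric, positive definite *)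
  M i1 i2 = 0 -> M i1 i3 = 0 -> M i2 i1 = 0 -> M i3 i1 = 0 ->
  0 < M i1 i1 -> 0 < M i2 i2 -> 0 < M i2 i3 -> 0 < M i3 i2 -> 0 < M i3 i3 ->
  M^T = M -> posdef M ->
  (* kappa23 kappa32 < kappa22 kappa33 and positive gains *)
  kappa M i2 i3 * kappa M i3 i2 < kappa M i2 i2 * kappa M i3 i3 ->
  0 < G1 -> 0 < G2 -> 0 < G3 ->
  (* nudot, zetadot are the time derivatives of nu, zeta for t > 0 *)
  (forall t : R, 0 < t -> forall i : 'I_3,
      is_derive t 1 (fun s => nu s i 0) (nudot t i 0)) ->
  (forall t : R, 0 < t -> forall i : 'I_3,
      is_derive t 1 (fun s => zeta s i 0) (zetadot t i 0)) ->
  (* the solution is continuous at t = 0 from the right *)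
  (forall i : 'I_3, nu s i 0 @[s --> 0^'+] --> nu 0 i 0) ->
  (forall i : 'I_3, zeta s i 0 @[s --> 0^'+] --> zeta 0 i 0) ->
  (* ship dynamics with constant disturbance taud *)
  (forall t : R, 0 < t ->
      M *m nudot t + Dmat h (nu t) *m nu t + Cmat M (nu t) *m nu t
      = tau t + taud) ->
  (* disturbance observer *)
  (forall t : R, 0 < t ->
      zetadot t = - (Tmat M G1 G2 G3 *m invmx M *m
        (tau t + (zeta t + Tmat M G1 G2 G3 *m nu t)
         - Dmat h (nu t) *m nu t - Cmat M (nu t) *m nu t))) ->
  let z := fun t => taud - (zeta t + Tmat M G1 G2 G3 *m nu t) in
  (forall t : R, 0 < t -> forall i : 'I_3,
      is_derive t 1 (fun s => z s i 0)
        (((- sigma M) *: Gdiag G1 G2 G3 *m z t) i 0)) /\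
  (forall t : R, 0 <= t -> forall i : 'I_3,
      z t i 0 = expR (- sigma M * Gam G1 G2 G3 i * t) * z 0 i 0).
Proof.
move=> h12 h13 h21 h31 p11 p22 p23 p32 p33 MT pd hk g1 g2 g3 dnu dzeta cnu czeta
  Hdyn Hobs z.
set T := Tmat M G1 G2 G3.
have K : T *m invmx M = sigma M *: Gdiag G1 G2 G3 by apply: TK.
have MN1 := @MN R M h12 h13 h21 h31 p11 p33 pd.
have [uM _] := mulmx1_unit MN1.
have Hzd : forall t, 0 < t ->
    - zetadot t - T *m nudot t = (- sigma M) *: Gdiag G1 G2 G3 *m z t.
  move=> t t0.
  have Hn : nudot t = invmx M *m (tau t + taud - Dmat h (nu t) *m nu t
       - Cmat M (nu t) *m nu t).
    rewrite -(Hdyn t t0) -[LHS](mulKmx uM); congr (_ *m _).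
    by apply/matrixP => i j; rewrite !mxE; ring.
  rewrite Hobs // Hn opprK mulmxA -mulmxBr K.
  have -> : forall A B C D E : 'cV[R]_3, (A + B - C - D) - (A + E - C - D) = - (E - B).
    by move=> A B C D E; apply/matrixP => i j; rewrite !mxE; ring.
  by rewrite mulmxN scaleNr mulNmx.
have Hg : forall i s, z s i 0 = taud i 0 - zeta s i 0 -
    (T i i1 * nu s i1 0 + T i i2 * nu s i2 0 + T i i3 * nu s i3 0).
  by move=> i s; rewrite /z entry_lem.
have P1 : forall t : R, 0 < t -> forall i : 'I_3,
      is_derive t 1 (fun s => z s i 0)
        (((- sigma M) *: Gdiag G1 G2 G3 *m z t) i 0).
  move=> t t0 i.
  have H := @deriv_lin R (taud i 0) (T i i1) (T i i2) (T i i3) _ _ _ _ _ _ _ _ _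
    (dzeta t t0 i) (dnu t t0 i1) (dnu t t0 i2) (dnu t t0 i3).
  have -> : (fun s => z s i 0) = (fun s => taud i 0 - zeta s i 0 -
    (T i i1 * nu s i1 0 + T i i2 * nu s i2 0 + T i i3 * nu s i3 0)).
    by apply/funext => s; rewrite Hg.
  rewrite -Hzd // entry_lem2.
  move: H; congr (is_derive _ _ _ _).
split => //.
move=> t t0 i.
set c := sigma M * Gam G1 G2 G3 i.
have Hz' : forall s : R, 0 < s -> is_derive s 1 (fun s => z s i 0) (- c * z s i 0).
  move=> s s0; have := P1 s s0 i; rewrite entry3.
  by rewrite /c mulNr mulNr.
pose f := fun s => z s i 0 * expR (c * s).
have Hf : forall s : R, 0 < s -> is_derive s 1 f 0.
  move=> s s0; have H := is_deriveM (Hz' s s0) (@deriv_exp R c s).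
  move: H; congr (is_derive _ _ _ _); rewrite /GRing.scale /=; ring.
move: t0; rewrite le_eqVlt => /orP[/eqP <-|tp].
  by rewrite mulr0 expR0 mul1r.
have Hdf : forall x : R, x \in `]0, t[ -> is_derive x 1 f ((fun _ => 0) x).
  by move=> x; rewrite in_itv /= => /andP[x0 _]; exact: Hf.
have Hcont : {within `[0, t], continuous f}.
  apply/continuous_within_itvP => //; split.
  - by move=> x; rewrite in_itv /= => /andP[x0 _]; exact: (@cont_of_derive R _ _ _ (Hf x x0)).
  - have Hz0 : (fun s => z s i 0) x @[x --> 0^'+] --> z 0 i 0.
      have -> : (fun s => z s i 0) = (fun s => taud i 0 - zeta s i 0 -
        (T i i1 * nu s i1 0 + T i i2 * nu s i2 0 + T i i3 * nu s i3 0)).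
        by apply/funext => s; rewrite Hg.
      rewrite Hg; apply: cvg_lin => //.
    have He := cvg_at_right_filter (@cont_of_derive R _ _ _ (@deriv_exp R c 0)).
    exact: (cvgM Hz0 He).
  - exact: cvg_at_left_filter (@cont_of_derive R _ _ _ (Hf t tp)).
have [x _ Hx] := MVT tp Hdf Hcont.
move: Hx; rewrite mul0r /f mulr0 expR0 mulr1 => /eqP; rewrite subr_eq0 => /eqP <-.
have -> : - sigma M * Gam G1 G2 G3 i * t = - (c * t) by rewrite /c; ring.
rewrite expRN mulrC -mulrA mulfV ?mulr1 //; exact: lt0r_neq0 (expR_gt0 _).
Qed.
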